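(* Let $q\ge 3$ be a prime power and $s,t$ integers with $1\le s<t\le q$ and $t-s\ge 2$. Then there exists a linear AOA$(s,t,q+1,q)$.
   Context: An orthogonal array OA$(t,k,v)$ (with $1\le t\le k$) is a $v^t\times k$ array with entries from a set $X$ of size $v$ such that, for every choice of $t$ of its columns, each $t$-tuple in $X^t$ appears exactly once as a row of the corresponding $v^t\times t$ subarray. For integers $1\le s\le t\le k$, an augmented orthogonal array AOA$(s,t,k,v)$ is a $v^t\times(k+1)$ array $A$ such that: (1) the first $k$ columns of $A$ form an OA$(t,k,v)$ on a symbol set $X$ of size $v$; (2) the last column of $A$ has entries from a set $Y$ of size $v^{t-s}$; (3) for any choice of $s$ of the first $k$ columns, these $s$ columns together with the last column contain every $(s+1)$-tuple of $X^s\times Y$ exactly once as a row. For a prime power $q$, an AOA$(s,t,k,q)$ is linear if $X=\mathbb{F}_q$, $Y=\mathbb{F}_q^{t-s}$, and its set of rows, regarded as vectors in $\mathbb{F}_q^{k}\times\mathbb{F}_q^{t-s}=\mathbb{F}_q^{k+t-s}$, is an $\mathbb{F}_q$-linear subspace. *)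

(* Defs.v *)
From HB Require Import structures.
From mathcomp Require Import all_boot all_order all_algebra all_field.
Set Implicit Arguments. Unset Strict Implicit. Unset Printing Implicit Defensive.
Import GRing.Theory.
Local Open Scope ring_scope.

(* Rows of the array are vectors in F^k x F^(t-s) = F^(k + (t-s)); the first k
   coordinates (lshift) are the OA columns, the last t-s (rshift) encode the
   symbol of the last column, an element of Y = F^(t-s). Since the rows of a linear AOA form a set, "appears
   exactly once" means "exactly one row of S has these entries". *)
Definition is_linear_AOA (F : finFieldType) (s t k : nat)
    (S : {set 'rV[F]_(k + (t - s))}) : Prop :=
  [/\ [/\ (1 <= s)%N, (s <= t)%N & (t <= k)%N],
      (0 \in S) /\ (forall (a : F) u v, u \in S -> v \in S -> a *: u + v \in S),
      #|S| = (#|F| ^ t)%N,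
      (forall c : 'I_t -> 'I_k, injective c -> forall x : 'I_t -> F,
         #|[set r in S | [forall i, r 0 (lshift (t - s) (c i)) == x i]]| = 1%N)
    &
      (forall c : 'I_s -> 'I_k, injective c -> forall (x : 'I_s -> F)
         (y : 'rV[F]_(t - s)),
         #|[set r in S | [forall i, r 0 (lshift (t - s) (c i)) == x i]
                        && [forall j, r 0 (rshift k j) == y 0 j]]| =  1%N)].
Arguments is_linear_AOA {F} s t k S.

(* Main.v *)
Require Import Defs.
From HB Require Import structures.
From mathcomp Require Import all_boot all_order all_algebra all_field.
From mathcomp Require Import zify.
Set Implicit Arguments. Unset Strict Implicit. Unset Printing Implicit Defensive.
Import GRing.Theory.
Local Open Scope ring_scope.

Section Aux.
Variable F : finFieldType.

Lemma cop_prod (m : {poly F}) (rs : seq F) : (forall r, r \in rs -> ~~ root m r) ->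
  coprimep m (\prod_(z <- rs) ('X - z%:P)).
Proof.
elim: rs => [|r rs IH] nr; first by rewrite big_nil coprimep1.
rewrite big_cons coprimepMr coprimep_XsubC nr ?mem_head //=.
by apply: IH => x hx; apply: nr; rewrite inE hx orbT.
Qed.

Lemma kill (p m : {poly F}) (rs : seq F) : m != 0 -> uniq rs -> all (root p) rs ->
  (forall r, r \in rs -> ~~ root m r) -> m %| p ->
  (size p <= (size m).-1 + size rs)%N -> p = 0.
Proof.
move=> m0 urs rts nr dmp sp; apply/eqP; apply: contraTT sp => p0.
have dP := uniq_roots_dvdp rts; rewrite uniq_rootsE in dP; have {}dP := dP urs.
have : m * (\prod_(z <- rs) ('X - z%:P)) %| p by rewrite Gauss_dvdp ?cop_prod // dmp dP.
move/(dvdp_leq p0); rewrite size_mul // ?monic_neq0 ?monic_prod_XsubC //.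
rewrite size_prod_XsubC -ltnNge addnS /=.
have : (0 < size m)%N by rewrite size_poly_gt0.
by case: (size m) => // n _ /=; rewrite ltnS.
Qed.

Lemma rootless (d : nat) : (2 <= d)%N ->
  exists m : {poly F}, size m = d.+1 /\ forall a, ~~ root m a.
Proof.
case: d => [|[|d]] // _.
pose f (a : F) := - (a ^+ d.+1 * (a - 1))^-1.
have [c cn] : exists c, c \notin codom f.
  apply/existsP; apply: contraT; rewrite negb_exists => /forallP H.
  have H' : forall c, c \in codom f by move=> c; have := H c; rewrite negbK.
  have : #|image f F| == #|F|.
    rewrite -/(codom f); apply/eqP; rewrite -[RHS](@card_codom _ _ id); last by [].
    by apply/eq_card => y; rewrite H' codom_f.
  move/image_injP => fi.
  have f0 : f 0 = f 1 by rewrite /f expr0n subrr !mulr0 mul0r.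
  by have /eqP := fi 0 1 isT isT f0; rewrite eq_sym oner_eq0.
have c0 : c != 0.
  apply: contraNneq cn => ->; apply/codomP; exists 0.
  by rewrite /f expr0n mul0r invr0 oppr0.
exists (1 + c *: ('X^(d.+1) * ('X - 1%:P))); split.
  have sz : size (c *: ('X^(d.+1) * ('X - 1%:P))) = d.+3.
    rewrite size_scale // size_mul ?polyXsubC_eq0 //.
      by rewrite size_polyXn size_XsubC addn2.
    by rewrite monic_neq0 ?monicXn.
  by rewrite addrC size_addl sz // size_poly1.
move=> a; rewrite /root.
set pp := a ^+ d.+1 * (a - 1).
have -> : (1 + c *: ('X^(d.+1) * ('X - 1%:P))).[a] = 1 + c * pp.
  by rewrite hornerD hornerC hornerZ hornerM hornerXn hornerXsubC.
have [->|pn0] := eqVneq pp 0; first by rewrite mulr0 addr0 oner_eq0.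
apply: contra cn; rewrite addrC addr_eq0 => /eqP h; apply/codomP; exists a.
rewrite /f -/pp -mulN1r -h mulfK //.
Qed.

Variable t : nat.
Local Notation q := #|F|.

Definition colv (p : {poly F}) (j : 'I_q.+1) : F :=
  if (j < q)%N then p.[nth 0 (enum F) j] else p`_t.-1.

Lemma colvB p r j : colv (p - r) j = colv p j - colv r j.
Proof. by rewrite /colv; case: ifP => _; rewrite ?hornerD ?hornerN ?coefB. Qed.

Lemma colvZD a p r j : colv (a *: p + r) j = a * colv p j + colv r j.
Proof. by rewrite /colv; case: ifP => _; rewrite ?hornerD ?hornerZ ?coefD ?coefZ. Qed.

Lemma vanish (n : nat) (c : 'I_n -> 'I_q.+1) (mm : {poly F}) (v : 'rV[F]_t) :
  injective c -> mm != 0 -> (forall a, ~~ root mm a) -> mm %| rVpoly v ->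
  (forall i, colv (rVpoly v) (c i) = 0) -> (t <= (size mm).-1 + n)%N -> v = 0.
Proof.
move=> ci mm0 nr dv H tle.
suff p0 : rVpoly v = 0 by rewrite -[v]rVpolyK p0 linear0.
set p := rVpoly v in dv H *.
have sp : (size p <= t)%N by apply: size_poly.
pose P := fun i : 'I_n => (c i < q)%N.
pose rs := [seq nth 0 (enum F) (c i) | i <- enum 'I_n & P i].
have sq : size (enum F) = q by rewrite -cardE.
apply: (@kill p mm rs) => //.
- rewrite map_inj_in_uniq; first by rewrite filter_uniq // enum_uniq.
  move=> x y; rewrite !mem_filter => /andP [Px _] /andP [Py _] e.
  have := @nth_uniq _ 0 (enum F) (c x) (c y); rewrite enum_uniq sq => /(_ Px Py isT).
  rewrite e eqxx => /esym/eqP e'; apply: ci; exact: val_inj.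
- apply/allP => r /mapP [i]; rewrite mem_filter => /andP [Pi _] ->.
  by rewrite /root; have := H i; rewrite /colv (_ : (c i < #|F|)%N = true) // => ->.
have cnt : (n = size rs + count (predC P) (enum 'I_n))%N.
  by rewrite size_map size_filter count_predC size_enum_ord.
case: (boolP [exists i, ~~ P i]) => [/existsP [i0 Pi0] | /existsPn allP].
- have Hi0 : p`_t.-1 = 0 by have := H i0; rewrite /colv (negbTE (Pi0 : ~~ (c i0 < #|F|)%N)).
  have sp' : (size p <= t.-1)%N.
    move: sp; case: t Hi0 => [|t'] //= Hi0.
    rewrite leq_eqVlt ltnS => /orP [/eqP e|//].
    have : p != 0 by rewrite -size_poly_eq0 e.
    by rewrite -lead_coef_eq0 lead_coefE e Hi0 eqxx.
  have c1 : (count (predC P) (enum 'I_n) <= 1)%N.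
    rewrite -size_filter -[1%N]/(size [:: i0]); apply: uniq_leq_size.
      by rewrite filter_uniq ?enum_uniq.
    move=> i; rewrite mem_filter /= => /andP [Pi _]; rewrite inE; apply/eqP/ci.
    apply: val_inj; have := ltn_ord (c i); have := ltn_ord (c i0); move: Pi Pi0; rewrite /P /=; lia.
  move: c1 cnt; set k := count _ _ => c1 cnt; rewrite cnt in tle; apply: (leq_trans sp'); rewrite -subn1 leq_subLR; apply: (leq_trans tle); by rewrite addnA [(1 + _)%N]addnC leq_add2l.
- have c0 : count (predC P) (enum 'I_n) = 0%N.
    by apply/eqP; rewrite eqn0Ngt -has_count; apply/hasPn => i _ /=; have := allP i.
  by apply: (leq_trans sp); rewrite cnt c0 addn0 in tle.
Qed.

Definition phi (d : nat) (m : {poly F}) (v : 'rV[F]_t) : 'rV[F]_(q.+1 + d) :=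
  row_mx (\row_(j < q.+1) colv (rVpoly v) j) (poly_rV (rVpoly v %% m)).

Lemma phiL d m a u v : phi d m (a *: u + v) = a *: phi d m u + phi d m v.
Proof.
rewrite /phi scale_row_mx add_row_mx linearP; congr row_mx.
  by apply/rowP => j; rewrite !mxE colvZD.
by rewrite modpD modpZl linearP.
Qed.

Lemma phi_l d m v j : phi d m v 0 (lshift d j) = colv (rVpoly v) j.
Proof. by rewrite row_mxEl mxE. Qed.

Lemma phi_r d m v j : phi d m v 0 (rshift q.+1 j) = (poly_rV (d := d) (rVpoly v %% m)) 0 j.
Proof. by rewrite row_mxEr. Qed.

End Aux.

Theorem theorem3p7 (F : finFieldType) (s t : nat) :
  (3 <= #|F|)%N -> (1 <= s)%N -> (s < t)%N -> (t <= #|F|)%N -> (2 <= t - s)%N ->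
  exists S : {set 'rV[F]_(#|F|.+1 + (t - s))}, is_linear_AOA s t #|F|.+1 S.
Proof.
move=> q3 s1 st tq d2.
have [m [sm nr]] := rootless F d2.
have m0 : m != 0 by rewrite -size_poly_eq0 sm.
have tkd : (t <= (size m).-1 + s)%N by rewrite sm /= subnK // ltnW.
pose ph := @phi F t (t - s) m.
have phL a u v : ph (a *: u + v) = a *: ph u + ph v by apply: phiL.
have ph_inj : injective ph.
  move=> u w e; apply/eqP; rewrite -subr_eq0; apply/eqP.
  apply: (@vanish F t #|F|.+1 id 1) => //.
  - by rewrite oner_eq0.
  - by move=> a; apply: root1.
  - by apply: dvd1p.
  - by move=> i; rewrite linearB colvB -!(@phi_l _ _ (t - s) m) -/ph e subrr.
  by rewrite size_poly1 /= add0n leqW.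
exists [set ph v | v : 'rV_t]; split.
- by rewrite s1 ltnW //= leqW.
- split.
    apply/imsetP; exists 0 => //.
    by have := phL (-1) 0 0; rewrite scaler0 addr0 scaleN1r addNr.
  move=> a u v /imsetP [u' _ ->] /imsetP [v' _ ->]; rewrite -phL; exact: imset_f.
- by rewrite card_imset // card_mx mul1n.
- move=> c ci x.
  pose psi (v : 'rV[F]_t) := [ffun i => colv t (rVpoly v) (c i)] : {ffun 'I_t -> F}.
  have psi_inj : injective psi.
    move=> u w e; apply/eqP; rewrite -subr_eq0; apply/eqP.
    apply: (@vanish F t t c 1) => //.
    - by rewrite oner_eq0.
    - by move=> a; apply: root1.
    - by apply: dvd1p.
    - move=> i; rewrite linearB colvB.
      by move/ffunP: e => /(_ i); rewrite !ffunE => ->; rewrite subrr.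
    by rewrite size_poly1.
  have := @inj_card_onto _ _ psi psi_inj _ (finfun x).
  rewrite card_ffun card_ord card_mx mul1n leqnn => /(_ isT) /codomP [v0 hv0].
  rewrite (_ : [set r in _ | _] = [set ph v0]); first exact: cards1.
  apply/setP => r; rewrite !inE; apply/andP/eqP => [[/imsetP [v _ ->] /forallP H]|->].
    congr ph; apply: psi_inj; rewrite -hv0; apply/ffunP => i; rewrite !ffunE.
    by rewrite -(@phi_l _ _ (t - s) m); apply/eqP.
  split; first exact: imset_f.
  apply/forallP => i; rewrite phi_l.
  by move/ffunP: hv0 => /(_ i); rewrite !ffunE => <-.
- move=> c ci x y.
  pose psi (v : 'rV[F]_t) := ([ffun i => colv t (rVpoly v) (c i)], poly_rV (d := t - s) (rVpoly v %% m))
    : {ffun 'I_s -> F} * 'rV[F]_(t - s).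
  have psi_inj : injective psi.
    move=> u w [e1 e2]; apply/eqP; rewrite -subr_eq0; apply/eqP.
    apply: (@vanish F t s c m) => //.
    - have sz (p : {poly F}) : (size (p %% m)%R <= t - s)%N by rewrite -ltnS -sm ltn_modpN0 //.
      have em : rVpoly u %% m = rVpoly w %% m.
        rewrite -[LHS](@poly_rV_K F (t - s) _ (sz (rVpoly u))) e2.
        rewrite (@poly_rV_K F (t - s) _ (sz (rVpoly w))); reflexivity.
      rewrite linearB /dvdp modpD modpN em subrr eqxx; exact: isT.
    - move=> i; rewrite linearB colvB.
      by move/ffunP: e1 => /(_ i); rewrite !ffunE => ->; rewrite subrr.
  have := @inj_card_onto _ _ psi psi_inj _ (finfun x, y).
  rewrite card_prod card_ffun card_ord !card_mx !mul1n -expnD (subnKC (ltnW st)) leqnn.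
  move=> /(_ isT) /codomP [v0 hv0].
  rewrite (_ : [set r in _ | _] = [set ph v0]); first exact: cards1.
  apply/setP => r; rewrite !inE; apply/andP/eqP => [[/imsetP [v _ ->] /andP [/forallP H1 /forallP H2]]|->].
    congr ph; apply: psi_inj; rewrite -hv0; congr pair.
      apply/ffunP => i; rewrite !ffunE.
      by rewrite -(@phi_l _ _ (t - s) m); apply/eqP.
    apply/rowP => j; rewrite -(@phi_r _ _ (t - s) m); exact/eqP/H2.
  case: hv0 => hx hy.
  split; first exact: imset_f.
  apply/andP; split; apply/forallP => i.
    rewrite phi_l; move/ffunP: hx => /(_ i); rewrite !ffunE => ->; exact: eqxx.
  by rewrite phi_r hy.
Qed.
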